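(* Suppose we are given six bases of $V$, called basis 1, …, basis 6. The following are equivalent: (i) the transition matrix from basis 1 to basis 2, from basis 3 to basis 4, and from basis 5 to basis 6 is upper triangular Toeplitz, and the transition matrix from basis 2 to basis 3, from basis 4 to basis 5, and from basis 6 to basis 1 is antidiagonal; (ii) there exists an LR triple $A,B,C$ on $V$ such that basis 1, 2, 3, 4, 5, 6 is an $(A,C)$-basis, $(A,B)$-basis, $(B,A)$-basis, $(B,C)$-basis, $(C,B)$-basis, $(C,A)$-basis of $V$, respectively. If (i), (ii) hold, then the LR triple $A,B,C$ is uniquely determined by the six bases.
   Context: Let $V$ be a vector space over a field $\mathbb F$ with $\dim V=d+1$, $d\ge0$; matrices are indexed by $0,\dots,d$. The transition matrix from a basis $(u_i)$ to a basis $(v_i)$ is $S$ with $v_k=\sum_iS_{ik}u_i$. A matrix is upper triangular Toeplitz if its $(i,k)$-entry is $\gamma_{k-i}$ for $i\le k$ and $0$ for $i>k$, for some scalars $\gamma_0,\dots,\gamma_d$; it is antidiagonal if its $(i,k)$-entry is $0$ whenever $i+k\ne d$. A decomposition of $V$ is a sequence $(V_i)_{i=0}^d$ of one-dimensional subspaces with $V=\bigoplus V_i$; $X$ lowers it if $XV_i=V_{i-1}$ ($1\le i\le d$), $XV_0=0$; raises it if $XV_i=V_{i+1}$ ($0\le i\le d-1$), $XV_d=0$. An ordered pair $X,Y$ is an LR pair if some decomposition (unique, the $(X,Y)$-decomposition) is lowered by $X$ and raised by $Y$. An LR triple is $A,B,C\in\mathrm{End}(V)$ such that every ordered pair of distinct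 elements among $A,B,C$ is an LR pair. For an LR pair $X,Y$, an $(X,Y)$-basis is a basis $(v_i)$ with $v_i$ in the $i$-th component of the $(X,Y)$-decomposition and $Xv_i=v_{i-1}$ for $1\le i\le d$. *)

(* Defs.v *)
From HB Require Import structures.
From mathcomp Require Import all_boot all_order all_algebra.
Set Implicit Arguments. Unset Strict Implicit. Unset Printing Implicit Defensive.
Import GRing.Theory.
Local Open Scope ring_scope.

Section LR.
Variables (F : fieldType) (V : vectType F) (d : nat).

Definition transition (u v : (d.+1).-tuple V) : 'M[F]_(d.+1) :=
  \matrix_(i < d.+1, k < d.+1) coord u i (tnth v k).

Definition upper_toeplitz (S : 'M[F]_(d.+1)) : Prop :=
  exists gamma : nat -> F, forall i k : 'I_(d.+1),
    S i k = if (i <= k)%N then gamma (k - i)%N else 0.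

Definition antidiagonal (S : 'M[F]_(d.+1)) : Prop :=
  forall i k : 'I_(d.+1), (i + k != d)%N -> S i k = 0.

(* A decomposition (V_i)_{i=0..d}; indices are naturals, only 0..d matter. *)
Definition decomposition (Vs : nat -> {vspace V}) : Prop :=
  [/\ forall i, (i <= d)%N -> \dim (Vs i) = 1%N,
      directv (\sum_(i < d.+1) Vs i)%VS
    & (\sum_(i < d.+1) Vs i)%VS = fullv].

Definition lowers (X : 'End(V)) (Vs : nat -> {vspace V}) : Prop :=
  (forall i, (1 <= i <= d)%N -> (X @: Vs i)%VS = Vs i.-1) /\
  (X @: Vs 0%N)%VS = 0%VS.

Definition raises (X : 'End(V)) (Vs : nat -> {vspace V}) : Prop :=
  (forall i, (i < d)%N -> (X @: Vs i)%VS = Vs i.+1) /\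
  (X @: Vs d)%VS = 0%VS.

Definition LR_pair (X Y : 'End(V)) : Prop :=
  exists Vs, [/\ decomposition Vs, lowers X Vs & raises Y Vs].

Definition LR_triple (A B C : 'End(V)) : Prop :=
  [/\ LR_pair A B /\ LR_pair B A, LR_pair A C /\ LR_pair C A
    & LR_pair B C /\ LR_pair C B].

(* (X,Y)-basis: v_i lies in the i-th component of the (X,Y)-decomposition
   (which is unique, so "some" = "the") and X v_i = v_{i-1}. *)
Definition XY_basis (X Y : 'End(V)) (v : (d.+1).-tuple V) : Prop :=
  basis_of fullv v /\
  exists Vs, [/\ decomposition Vs, lowers X Vs, raises Y Vs,
    (forall i, (i <= d)%N -> v`_i \in Vs i)
    & (forall i, (1 <= i <= d)%N -> X v`_i = v`_i.-1)].

End LR.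

(* Main.v *)
Require Import Defs.
From HB Require Import structures.
From mathcomp Require Import all_boot all_order all_algebra.
From mathcomp Require Import zify.
Set Implicit Arguments. Unset Strict Implicit. Unset Printing Implicit Defensive.
Import GRing.Theory.
Local Open Scope ring_scope.

Section H.
Variables (F : fieldType) (V : vectType F) (d : nat).
Implicit Types (u v w : (d.+1).-tuple V) (X Y : 'End(V)).

Definition cu u (i : nat) (x : V) : F := coord u (inord i) x.

Definition shift X u :=
  (forall i, (1 <= i <= d)%N -> X u`_i = u`_i.-1) /\ X u`_0 = 0.

Lemma coord_eq u x y : basis_of fullv u ->
  (forall j, (j <= d)%N -> cu u j x = cu u j y) -> x = y.
Proof.
move=> hu h; rewrite (coord_basis hu (memvf x)) (coord_basis hu (memvf y)).
apply: eq_bigr => i _; have := h i (ltn_ord i); rewrite /cu inord_val => ->.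
by [].
Qed.


Lemma cu_nth u i j : basis_of fullv u -> (i <= d)%N -> (j <= d)%N ->
  cu u j u`_i = (i == j)%:R.
Proof.
move=> hu hi hj; rewrite /cu.
have -> : u`_i = u`_(inord i : 'I_d.+1) by rewrite inordK.
rewrite coord_free ?(basis_free hu) //.
suff -> : (inord i == inord j :> 'I_d.+1) = (i == j) by [].
by apply/eqP/eqP => [/(congr1 val)|->] //=; rewrite !inordK.
Qed.

Lemma shiftE X u x : basis_of fullv u -> shift X u ->
  X x = \sum_(i < d.+1) (if (i < d)%N then cu u i.+1 x else 0) *: u`_i.
Proof.
move=> hu [h1 h0]; rewrite {1}(coord_basis hu (memvf x)) linear_sum /=.
rewrite big_ord_recl /= linearZ /= h0 scaler0 add0r.
rewrite big_ord_recr /= ltnn scale0r addr0.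
apply: eq_bigr => i _; rewrite linearZ /= h1 /=; last by rewrite ltn_ord.
by rewrite ltn_ord /cu; congr (_ *: _); congr (coord _ _ _); apply: val_inj; rewrite /= inordK // ltnS ltn_ord.
Qed.

Lemma cu_shift X u x j : basis_of fullv u -> shift X u -> (j <= d)%N ->
  cu u j (X x) = if (j < d)%N then cu u j.+1 x else 0.
Proof.
move=> hu hX hj; rewrite (shiftE x hu hX) {1}/cu coord_sum_free ?(basis_free hu) //.
by rewrite inordK.
Qed.


Lemma vline0' : (<[0 : V]> = 0)%VS.
Proof. by apply/eqP; rewrite -dimv_eq0 dim_vline eqxx. Qed.

Lemma lineZ (c : F) (x : V) : c != 0 -> (<[c *: x]> = <[x]>)%VS.
Proof.
move=> c0; apply/subv_anti/andP; split; rewrite -memvE.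
  by rewrite memvZ // memv_line.
by have := memvZ c^-1 (memv_line (c *: x)); rewrite scalerK.
Qed.

Lemma line_eq (U : {vspace V}) x : x \in U -> x != 0 -> \dim U = 1%N ->
  U = <[x]>%VS.
Proof.
move=> hx nx hU; apply/eqP; rewrite eq_sym eqEdim -memvE hx dim_vline nx hU.
by [].
Qed.

Lemma nz_basis u i : basis_of fullv u -> (i <= d)%N -> u`_i != 0.
Proof.
move=> hu hi; apply: (free_not0 (basis_free hu)); apply: mem_nth.
by rewrite size_tuple.
Qed.

Lemma toep_of_shift X u v : basis_of fullv u -> basis_of fullv v ->
  shift X u -> shift X v -> upper_toeplitz (transition u v).
Proof.
move=> hu hv hXu [v1 v0].
pose t i k := cu u i v`_k.
have ha : forall j k, (j < d)%N -> (1 <= k <= d)%N -> t j k.-1 = t j.+1 k.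
  move=> j k hj hk; rewrite /t -v1 //.
  rewrite cu_shift //. rewrite hj //. by rewrite ltnW.
have hb : forall j, (j < d)%N -> t j.+1 0%N = 0.
  move=> j hj; have := cu_shift v`_0 hu hXu (ltnW hj).
  by rewrite v0 hj /t /cu linear0 => <-.
have main : forall i k, (i <= d)%N -> (k <= d)%N ->
    t i k = if (i <= k)%N then t 0%N (k - i)%N else 0.
  elim=> [|i IH] k hi hk; first by rewrite subn0.
  case: k hk => [|k] hk; first by rewrite hb.
  rewrite -(ha i k.+1) //= (IH k (ltnW hi) (ltnW hk)) ltnS subSS //.
exists (fun n => t 0%N n) => i k; rewrite mxE (tnth_nth 0).
by have := main i k (ltn_ord i) (ltn_ord k); rewrite /t /cu inord_val.
Qed.

Lemma shift_of_toep X u v : basis_of fullv u -> basis_of fullv v ->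
  shift X u -> upper_toeplitz (transition u v) -> shift X v.
Proof.
move=> hu hv hXu [g hg].
have hc : forall j k, (j <= d)%N -> (k <= d)%N ->
    cu u j v`_k = if (j <= k)%N then g (k - j)%N else 0.
  move=> j k hj hk; have := hg (inord j) (inord k).
  by rewrite mxE (tnth_nth 0) /= !inordK.
split.
  move=> i hi; apply: (coord_eq hu) => j hj.
  rewrite cu_shift //. rewrite (hc j i.-1 hj); last by lia.
  case: ltnP => hjd.
    rewrite hc //; last by lia.
    have -> : (j.+1 <= i)%N = (j <= i.-1)%N by lia.
    by have -> : (i - j.+1)%N = (i.-1 - j)%N by lia.
  by rewrite ifF //; lia.
apply: (coord_eq hu) => j hj.
rewrite cu_shift // /cu linear0; case: ltnP => h //.
by rewrite -/(cu u j.+1 v`_0) hc.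
Qed.

Definition paired u w := forall k, (k <= d)%N ->
  exists2 t : F, t != 0 & w`_k = t *: u`_(d - k).

Lemma antid_paired u w : basis_of fullv u -> basis_of fullv w ->
  antidiagonal (transition u w) -> paired u w.
Proof.
move=> hu hw hA k hk.
have e := coord_basis hu (memvf w`_k).
rewrite (bigD1 (inord (d - k))) //= big1 ?addr0 in e; last first.
  move=> i ne; have := hA i (inord k); rewrite mxE (tnth_nth 0) /= inordK //.
  move=> -> ; first by rewrite scale0r.
  apply: contra ne => /eqP h; apply/eqP/val_inj; rewrite /= inordK; lia.
rewrite inordK in e; last by lia.
exists (coord u (inord (d - k)) w`_k) => //.
apply/eqP => h0; move: e; rewrite h0 scale0r => e.
by have := nz_basis hw hk; rewrite e eqxx.
Qed.

Lemma paired_sym u w : paired u w -> paired w u.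
Proof.
move=> h k hk; have [t t0 e] := h (d - k)%N (leq_subr _ _).
rewrite subKn // in e; exists t^-1; first by rewrite invr_eq0.
by rewrite e scalerA mulVf // scale1r.
Qed.

Definition raise Y w :=
  (forall k, (k < d)%N -> exists2 c : F, c != 0 & Y w`_k = c *: w`_k.+1)
  /\ Y w`_d = 0.

Lemma raise_of_paired X u w : shift X u -> paired u w -> raise X w.
Proof.
move=> [h1 h0] h; split.
  move=> k hk; have [t t0 e] := h k (ltnW hk); have [t' t0' e'] := h k.+1 hk.
  exists (t / t'); first by rewrite mulf_neq0 // invr_eq0.
  rewrite e linearZ /= h1; last by lia.
  have -> : (d - k).-1 = (d - k.+1)%N by lia.
  by rewrite e' scalerA divfK.
have [t _ e] := h d (leqnn _); by rewrite e subnn linearZ /= h0 scaler0.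
Qed.

Lemma mkXY X Y v : basis_of fullv v -> shift X v -> raise Y v -> XY_basis X Y v.
Proof.
move=> hv [h1 h0] [r1 rd]; split=> //; exists (fun i => <[v`_i]>%VS); split.
- split.
  + by move=> i hi; rewrite dim_vline nz_basis.
  + apply/directv_sum_independent => us hus hs i _.
    pose k i := coord v i (us i).
    have ek : forall i, us i = k i *: v`_i.
      move=> j; rewrite /k; have [c ->] := vlineP _ _ (hus j isT).
      by rewrite linearZ /= coord_free ?(basis_free hv) // eqxx mulr1.
    have /freeP hf := basis_free hv.
    have hs' : \sum_(j < d.+1) k j *: v`_j = 0.
      have hs2 : \sum_(j < d.+1) us j = 0 := hs.
      by apply: etrans hs2; apply: eq_bigr => j _; rewrite -ek.
    by rewrite ek (hf k hs' i) scale0r.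
  + rewrite -(span_basis hv) span_def big_tuple; apply: eq_bigr => i _.
    by rewrite (tnth_nth 0).
- split; last by rewrite limg_line h0 vline0'.
  by move=> i hi; rewrite limg_line h1.
- split; last by rewrite limg_line rd vline0'.
  by move=> i hi; have [c c0 e] := r1 i hi; rewrite limg_line e lineZ.
- by move=> i _; apply: memv_line.
- exact: h1.
Qed.

Lemma XYfacts X Y v : XY_basis X Y v ->
  [/\ basis_of fullv v, shift X v,
      (forall k, (k < d)%N -> Y v`_k \in <[v`_k.+1]>%VS) & Y v`_d = 0].
Proof.
case=> hv [Vs [[hdim _ _] [l1 l0] [r1 rd] hin hX]].
have line : forall i, (i <= d)%N -> Vs i = <[v`_i]>%VS.
  by move=> i hi; apply: line_eq; [apply: hin | apply: nz_basis | apply: hdim].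
split=> //.
- split=> //; apply/eqP; rewrite -memv0 -l0; exact/memv_img/hin.
- move=> k hk; rewrite -(line k.+1 hk) -r1 //; exact/memv_img/hin/ltnW.
- apply/eqP; rewrite -memv0 -rd; exact/memv_img/hin.
Qed.

Lemma LR_of_XY X Y v : XY_basis X Y v -> LR_pair d X Y.
Proof. by case=> _ [Vs [? ? ? _ _]]; exists Vs. Qed.

Lemma ker_shift X u y : basis_of fullv u -> shift X u -> X y = 0 ->
  y \in <[u`_0]>%VS.
Proof.
move=> hu hX hy.
have hc : forall j, (j < d)%N -> cu u j.+1 y = 0.
  move=> j hj; have := cu_shift y hu hX (ltnW hj).
  by rewrite hy hj /cu linear0 => <-.
rewrite (coord_basis hu (memvf y)) big_ord_recl big1 ?addr0.
  by rewrite memvZ // memv_line.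
move=> i _; have := hc i (ltn_ord i); rewrite /cu.
have -> : (inord i.+1 : 'I_d.+1) = lift ord0 i by apply: val_inj; rewrite /= inordK // ltnS.
by move=> ->; rewrite scale0r.
Qed.

Lemma antid_of X Y u w : basis_of fullv u -> basis_of fullv w ->
  shift X u -> (forall k, (k < d)%N -> Y u`_k \in <[u`_k.+1]>%VS) ->
  shift Y w -> X w`_d = 0 -> antidiagonal (transition u w).
Proof.
move=> hu hw hXu hYu [w1 w0] hXw.
have step : forall j, (j <= d)%N -> w`_(d - j) \in <[u`_j]>%VS.
  elim=> [|j IH] hj; first by rewrite subn0; apply: (ker_shift hu hXu).
  have [a ea] := vlineP _ _ (IH (ltnW hj)).
  have -> : w`_(d - j.+1) = Y w`_(d - j).
    by rewrite w1; [congr (_`_ _); lia | lia].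
  by rewrite ea linearZ /= memvZ // hYu.
move=> i k hik; rewrite mxE (tnth_nth 0).
have [a ea] := vlineP _ _ (step (d - k)%N (leq_subr _ _)).
rewrite subKn in ea; last by rewrite -ltnS.
rewrite ea linearZ /=.
have := cu_nth (i:=(d - k)%N) (j:=i) hu (leq_subr _ _) (ltn_ord i); rewrite /cu inord_val => ->.
rewrite (_ : (d - k == i)%N = false) ?mulr0 //.
apply/negbTE; apply: contra hik => /eqP <-; apply/eqP; have := ltn_ord k; lia.
Qed.

Lemma shift_uniq X X' u : basis_of fullv u -> shift X u -> shift X' u -> X = X'.
Proof.
move=> hu [h1 h0] [h1' h0'].
apply/(fullv_lfunP _ _ (span_basis hu)) => x /(nthP 0) [i hi <-].
rewrite size_tuple in hi.
case: i hi => [|i] hi; first by rewrite h0 h0'.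
by rewrite h1 ?h1'.
Qed.

Lemma exists_shift u : basis_of fullv u -> exists X, shift X u.
Proof.
move=> hu; have [f hf] := linear_of_free u (0 :: take d u).
have e := hf (basis_free hu) ltac:(by rewrite /= size_take size_tuple ltnSn).
exists (linfun f).
have hn : forall i, (i <= d)%N -> linfun f u`_i = (0 :: take d u)`_i.
  by move=> i hi; rewrite lfunE -e (nth_map 0) // size_tuple.
split; last by rewrite hn.
move=> [|i] hi //; rewrite hn //= nth_take //.
Qed.

End H.

Theorem theorem34p1 (F : fieldType) (V : vectType F) (d : nat)
  (hdim : \dim (fullv : {vspace V}) = d.+1)
  (b1 b2 b3 b4 b5 b6 : (d.+1).-tuple V)
  (hb1 : basis_of fullv b1) (hb2 : basis_of fullv b2)
  (hb3 : basis_of fullv b3) (hb4 : basis_of fullv b4)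
  (hb5 : basis_of fullv b5) (hb6 : basis_of fullv b6) :
  let P := fun A B C : 'End(V) =>
    [/\ LR_triple d A B C,
        XY_basis A C b1 /\ XY_basis A B b2, XY_basis B A b3 /\ XY_basis B C b4
      & XY_basis C B b5 /\ XY_basis C A b6] in
  ([/\ upper_toeplitz (transition b1 b2), upper_toeplitz (transition b3 b4)
     & upper_toeplitz (transition b5 b6)] /\
   [/\ antidiagonal (transition b2 b3), antidiagonal (transition b4 b5)
     & antidiagonal (transition b6 b1)]
   <-> exists A B C, P A B C)
  /\ (forall A B C A' B' C', P A B C -> P A' B' C' ->
        [/\ A = A', B = B' & C = C']).
Proof.
move=> P; subst P; split.
  split.
  - case=> [[t12 t34 t56] [a23 a45 a61]].
    have [A hA1] := exists_shift hb1.
    have [B hB3] := exists_shift hb3.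
    have [C hC5] := exists_shift hb5.
    have hA2 := shift_of_toep hb1 hb2 hA1 t12.
    have hB4 := shift_of_toep hb3 hb4 hB3 t34.
    have hC6 := shift_of_toep hb5 hb6 hC5 t56.
    have p23 := antid_paired hb2 hb3 a23.
    have p45 := antid_paired hb4 hb5 a45.
    have p61 := antid_paired hb6 hb1 a61.
    have x1 := mkXY hb1 hA1 (raise_of_paired hC6 p61).
    have x2 := mkXY hb2 hA2 (raise_of_paired hB3 (paired_sym p23)).
    have x3 := mkXY hb3 hB3 (raise_of_paired hA2 p23).
    have x4 := mkXY hb4 hB4 (raise_of_paired hC5 (paired_sym p45)).
    have x5 := mkXY hb5 hC5 (raise_of_paired hB4 p45).
    have x6 := mkXY hb6 hC6 (raise_of_paired hA1 (paired_sym p61)).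
    exists A, B, C; split; [| by split | by split | by split].
    split; split; [exact: LR_of_XY x2 | exact: LR_of_XY x3 | exact: LR_of_XY x1
      | exact: LR_of_XY x6 | exact: LR_of_XY x4 | exact: LR_of_XY x5].
  - case=> A [B [C [_ [x1 x2] [x3 x4] [x5 x6]]]].
    have [_ sA1 wC1 zC1] := XYfacts x1.
    have [_ sA2 wB2 zB2] := XYfacts x2.
    have [_ sB3 wA3 zA3] := XYfacts x3.
    have [_ sB4 wC4 zC4] := XYfacts x4.
    have [_ sC5 wB5 zB5] := XYfacts x5.
    have [_ sC6 wA6 zA6] := XYfacts x6.
    split; split.
    + exact: toep_of_shift hb1 hb2 sA1 sA2.
    + exact: toep_of_shift hb3 hb4 sB3 sB4.
    + exact: toep_of_shift hb5 hb6 sC5 sC6.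
    + exact: antid_of hb2 hb3 sA2 wB2 sB3 zA3.
    + exact: antid_of hb4 hb5 sB4 wC4 sC5 zB5.
    + exact: antid_of hb6 hb1 sC6 wA6 sA1 zC1.
move=> A B C A' B' C' [_ [x1 _] [x3 _] [x5 _]] [_ [y1 _] [y3 _] [y5 _]].
have [_ s1 _ _] := XYfacts x1; have [_ s1' _ _] := XYfacts y1.
have [_ s3 _ _] := XYfacts x3; have [_ s3' _ _] := XYfacts y3.
have [_ s5 _ _] := XYfacts x5; have [_ s5' _ _] := XYfacts y5.
split; [exact: shift_uniq hb1 s1 s1' | exact: shift_uniq hb3 s3 s3' |
        exact: shift_uniq hb5 s5 s5'].
Qed.
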